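(* Consider an imprecise hidden Markov model as in the context with fixed output sequence $o_{1:n}$, under the positivity assumption. Let $k\in\{1,\dots,n-1\}$ and $z_{k-1}\in\mathcal{X}_{k-1}$. Then the set of state sequences produced by the optimal tree construction (described in the context) from the candidate set $\mathrm{Mog}(\mathcal{X}_{k:n}\mid z_{k-1},o_{k:n})$ is exactly $\mathrm{opt}(\mathcal{X}_{k:n}\mid z_{k-1},o_{k:n})$.
   Context: Setting: $n\ge1$; $\mathcal{X}_0=\{x_0\}$ a singleton; finite non-empty $\mathcal{X}_1,\dots,\mathcal{X}_n$, $\mathcal{O}_1,\dots,\mathcal{O}_n$; $\mathcal{X}_{k:\ell}=\times_{r=k}^\ell\mathcal{X}_r$, similarly $\mathcal{O}_{k:\ell}$; $\oplus$ denotes concatenation of sequences. Coherent lower previsions $\underline{P}$ satisfy $\underline{P}(f)\ge\min f$, $\underline{P}(\lambda f)=\lambda\underline{P}(f)$ ($\lambda\ge0$), $\underline{P}(f+g)\ge\underline{P}(f)+\underline{P}(g)$; $\overline{P}(f)=-\underline{P}(-f)$; $\underline{P}(A)=\underline{P}(\mathbb{I}_A)$. Local models: coherent $\underline{Q}_k(\cdot\mid z_{k-1})$ on gambles on $\mathcal{X}_k$ and $\underline{S}_k(\cdot\mid z_k)$ on gambles on $\mathcal{O}_k$. Joint models: $\underline{E}_n(\cdot\mid z_n):=\underline{S}_n(\cdot\mid z_n)$; for $k<n$, $\underline{E}_k(\cdot\mid X_k)$ is the conditionally independent natural extension of $\underline{S}_k(\cdot\mid X_k)$ and $\underline{P}_{k+1}(\cdot\mid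 X_k)$ (pointwise smallest separately coherent conditional lower prevision on gambles on $\mathcal{X}_{k+1:n}\times\mathcal{O}_{k:n}$ jointly coherent with and extending both, such that given $X_k$, $O_k$ and $(X_{k+1:n},O_{k+1:n})$ are mutually epistemically irrelevant); $\underline{P}_k(f\mid z_{k-1}):=\underline{Q}_k\big(\sum_{z_k}\mathbb{I}_{\{z_k\}}\underline{E}_k(f(z_k,\cdot)\mid z_k)\mid z_{k-1}\big)$. Positivity assumption: $\overline{Q}_k(\{z_k\}\mid z_{k-1})>0$, $\overline{S}_k(\{o_k\}\mid z_k)>0$ for all arguments. $\mathrm{opt}(\mathcal{X}_{k:n}\mid z_{k-1},o_{k:n})$ is the set of $\hat{x}_{k:n}$ with $\underline{P}_k(\mathbb{I}_{o_{k:n}}[\mathbb{I}_{x_{k:n}}-\mathbb{I}_{\hat{x}_{k:n}}]\mid z_{k-1})\le0$ for all $x_{k:n}\in\mathcal{X}_{k:n}$. Auxiliary quantities (for the fixed $o_{1:n}$): for $z_{k:n}\in\mathcal{X}_{k:n}$, $\alpha_k(z_{k:n}):=\overline{S}_k(\{o_k\}\mid z_k)\prod_{i=k+1}^n\overline{S}_i(\{o_i\}\mid z_i)\overline{Q}_i(\{z_i\}\mid z_{i-1})$ and $\beta_k(z_{k:n})$ the same with lower instead of upper previsions; $\alpha^{\max}_k(x_k):=\max\{\alpha_k(z_{k:n}):z_k=x_k\}$, $\beta^{\max}_k(x_k):=\max\{\beta_k(z_{k:n}):z_k=x_k\}$; threshold $\tau_k(x_k,\hat{x}_k\mid z_{k-1}):=\min\{a\ge0:\underline{Q}_k(\mathbb{I}_{\{x_k\}}-a\mathbb{I}_{\{\hat{x}_k\}}\mid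 z_{k-1})\le0\}$; $\alpha^{\mathrm{opt}}_k(\hat{x}_k\mid z_{k-1}):=\max_{x_k\neq\hat{x}_k}\beta^{\max}_k(x_k)\tau_k(x_k,\hat{x}_k\mid z_{k-1})$, and recursively for $s\in\{k+1,\dots,n\}$, $\alpha^{\mathrm{opt}}_k(z_{k:s}\mid z_{k-1}):=\alpha^{\mathrm{opt}}_k(z_{k:s-1}\mid z_{k-1})/\big(\overline{S}_{s-1}(\{o_{s-1}\}\mid z_{s-1})\overline{Q}_s(\{z_s\}\mid z_{s-1})\big)$, with $\alpha^{\mathrm{opt}}_k(z_{k:k}\mid z_{k-1}):=\alpha^{\mathrm{opt}}_k(z_k\mid z_{k-1})$. Let $\mathrm{Pos}_k(z_{k-1}):=\{z_k\in\mathcal{X}_k:\underline{Q}_k(\{z_k\}\mid z_{k-1})>0\text{ and }\underline{S}_k(\{o_k\}\mid z_k)>0\}$, and for $k<n$ define the candidate set $\mathrm{Mog}(\mathcal{X}_{k:n}\mid z_{k-1},o_{k:n}):=\bigcup_{z_k\in\mathrm{Pos}_k(z_{k-1})}z_k\oplus\mathrm{opt}(\mathcal{X}_{k+1:n}\mid z_k,o_{k+1:n})\ \cup\ \bigcup_{z_k\notin\mathrm{Pos}_k(z_{k-1})}z_k\oplus\mathcal{X}_{k+1:n}$. Optimal tree construction (for fixed $k<n$, $z_{k-1}$): first keep the states $\hat{x}_k\in\mathcal{X}_k$ with $\alpha^{\max}_k(\hat{x}_k)\ge\alpha^{\mathrm{opt}}_k(\hat{x}_k\mid z_{k-1})$.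 Then for $s=k+1,\dots,n$ in turn, for every kept prefix $\hat{x}_{k:s-1}$, keep the extensions $\hat{x}_{k:s-1}\oplus x_s$ ($x_s\in\mathcal{X}_s$) such that some element of $\mathrm{Mog}(\mathcal{X}_{k:n}\mid z_{k-1},o_{k:n})$ begins with $\hat{x}_{k:s-1}\oplus x_s$ and $\alpha^{\max}_s(x_s)\ge\alpha^{\mathrm{opt}}_k(\hat{x}_{k:s-1}\oplus x_s\mid z_{k-1})$. The output is the set of kept sequences of length $n-k+1$. *)

(* Defs.v *)
From HB Require Import structures.
From mathcomp Require Import all_boot all_order all_algebra.
From mathcomp Require Import boolp classical_sets reals.
Set Implicit Arguments. Unset Strict Implicit. Unset Printing Implicit Defensive.
Import Order.TTheory GRing.Theory Num.Theory.
Local Open Scope ring_scope.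
Local Open Scope classical_set_scope.

(* Finite product spaces X_{k:k+m} = X_k x X_{k+1} x ... x X_{k+m},         *)
Fixpoint tupT (F : nat -> finType) (k m : nat) : finType :=
  match m with
  | 0 => F k
  | m'.+1 => ((F k * tupT F k.+1 m')%type : finType)
  end.

Definition thead (F : nat -> finType) (k m : nat) : tupT F k m -> F k :=
  match m as m0 return tupT F k m0 -> F k with
  | 0 => fun x => x
  | _.+1 => fun x => x.1
  end.

Fixpoint tproj (F : nat -> finType) (f : forall i, F i) (k m : nat) : tupT F k m :=
  match m as m0 return tupT F k m0 with
  | 0 => f k
  | m'.+1 => (f k, tproj f k.+1 m')
  end.

(* tprefeq j u w : u and w have the same first j+1 coordinates,
   i.e. u_{k:k+j} = w_{k:k+j} *)
Fixpoint tprefeq (F : nat -> finType) (k m : nat) (j : nat) :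
    tupT F k m -> tupT F k m -> bool :=
  match m as m0 return tupT F k m0 -> tupT F k m0 -> bool with
  | 0 => fun u w => u == w
  | m'.+1 => fun u w =>
      (u.1 == w.1) && (if j is j'.+1 then tprefeq j' u.2 w.2 else true)
  end.

Section IHMM.
Variable R : realType.

Definition ind (T : eqType) (x : T) : T -> R := fun y => (y == x)%:R.

Definition coherent (T : finType) (P : (T -> R) -> R) : Prop :=
  [/\ (forall (f : T -> R) (c : R), (forall x, c <= f x) -> c <= P f),
      (forall (l : R) (f : T -> R), 0 <= l -> P (fun x => l * f x) = l * P f) &
      (forall f g : T -> R, P f + P g <= P (fun x => f x + g x))].

Definition upper (T : finType) (P : (T -> R) -> R) (f : T -> R) : R :=
  - P (fun x => - f x).

(* Independent natural extension of P1 (on T1) and P2 (on T2), on gambles on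
   T1 x T2 (de Cooman, Miranda & Zaffalon 2011, finite spaces):
   E(f) = sup { min (f - h1 - h2) : h1(.,y) in A1 for all y,
                                     h2(x,.) in A2 for all x },
   where A_i = { g : P_i(g) >= 0 }. *)
Definition indnatext (T1 T2 : finType) (P1 : (T1 -> R) -> R)
    (P2 : (T2 -> R) -> R) (f : T1 * T2 -> R) : R :=
  sup [set mu : R | exists h1 h2 : T1 * T2 -> R,
        [/\ (forall y, 0 <= P1 (fun x => h1 (x, y))),
            (forall x, 0 <= P2 (fun y => h2 (x, y))) &
            (forall w, mu <= f w - h1 w - h2 w)]].

Variables (X O : nat -> finType).
(* Q i z = \underline{Q}_i(. | z_{i-1} = z), S i z = \underline{S}_i(. | z_i = z) *)
Variable Q : forall i, X i.-1 -> (X i -> R) -> R.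
Variable S : forall i, X i -> (O i -> R) -> R.
(* the fixed output sequence (only o_1, ..., o_n are relevant) *)
Variable o : forall i, O i.

(* Joint model P_k(. | z_{k-1}) on gambles on X_{k:k+m} x O_{k:k+m}
   (with k+m = n). *)
Fixpoint Pj (k m : nat) : X k.-1 -> (tupT X k m * tupT O k m -> R) -> R :=
  match m as m0 return X k.-1 -> (tupT X k m0 * tupT O k m0 -> R) -> R with
  | 0 => fun z f => Q z (fun x => S x (fun y => f (x, y)))
  | m'.+1 => fun z f =>
      @Q k z (fun x =>
        indnatext (S x) (@Pj k.+1 m' x)
          (fun w => f ((x, w.2.1), (w.1, w.2.2))))
  end.

Definition opt (k m : nat) (z : X k.-1) : {set tupT X k m} :=
  [set xh | [forall x : tupT X k m,
     Pj z (fun w => (w.2 == tproj o k m)%:R * ((w.1 == x)%:R - (w.1 == xh)%:R))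
       <= 0]].

Definition Pos (k : nat) (z : X k.-1) : {set X k} :=
  [set x | (0 < Q z (ind x)) && (0 < S x (ind (o k)))].

(* Mog(X_{k:n} | z_{k-1}, o_{k:n}) (only meaningful for k < n, i.e. m > 0) *)
Definition Mog (k m : nat) (z : X k.-1) : {set tupT X k m} :=
  match m as m0 return {set tupT X k m0} with
  | 0 => finset.setT
  | m'.+1 => [set w | ((w.1 \in Pos z) && (w.2 \in @opt k.+1 m' w.1))
                      || (w.1 \notin Pos z)]
  end.

Fixpoint alpha (k m : nat) : tupT X k m -> R :=
  match m as m0 return tupT X k m0 -> R with
  | 0 => fun z => upper (S z) (ind (o k))
  | m'.+1 => fun z => upper (S z.1) (ind (o k))
                      * upper (@Q k.+1 z.1) (ind (thead z.2)) * alpha z.2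
  end.

Fixpoint beta (k m : nat) : tupT X k m -> R :=
  match m as m0 return tupT X k m0 -> R with
  | 0 => fun z => S z (ind (o k))
  | m'.+1 => fun z => S z.1 (ind (o k)) * @Q k.+1 z.1 (ind (thead z.2)) * beta z.2
  end.

(* maxima over {z_{k:n} : z_k = x} (all values are >= 0, so 0 is a neutral
   default for the max) *)
Definition alphamax (k m : nat) (x : X k) : R :=
  \big[Num.max/0]_(z : tupT X k m | thead z == x) alpha z.
Definition betamax (k m : nat) (x : X k) : R :=
  \big[Num.max/0]_(z : tupT X k m | thead z == x) beta z.

Definition tau (k : nat) (z : X k.-1) (x xh : X k) : R :=
  inf [set a : R | 0 <= a /\ Q z (fun y => ind x y - a * ind xh y) <= 0].

Definition aopt0 (k m : nat) (z : X k.-1) (xh : X k) : R :=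
  \big[Num.max/0]_(x : X k | x != xh) (betamax m x * tau z x xh).

(* Bat k m a j w : with a = alpha^opt_k(w_k | z_{k-1}), checks
   alpha^max_{k+j}(w_{k+j}) >= alpha^opt_k(w_{k:k+j} | z_{k-1}),
   using the recursion alpha^opt_k(w_{k:s}) =
   alpha^opt_k(w_{k:s-1}) / (Sup_{s-1}({o_{s-1}}|w_{s-1}) Qup_s({w_s}|w_{s-1})). *)
Fixpoint Bat (k m : nat) (a : R) (j : nat) : tupT X k m -> bool :=
  match m as m0 return tupT X k m0 -> bool with
  | 0 => fun w => a <= alphamax 0 w
  | m'.+1 => fun w =>
      if j is j'.+1 then
        Bat (a / (upper (S w.1) (ind (o k)) * upper (@Q k.+1 w.1) (ind (thead w.2))))
            j' w.2
      else a <= alphamax m'.+1 w.1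
  end.

(* Optimal tree construction (k < n, m = n - k).  kept j w holds iff the
   prefix w_{k:k+j} is kept at stage s = k + j of the construction. *)
Fixpoint kept (k m : nat) (z : X k.-1) (j : nat) (w : tupT X k m) : bool :=
  match j with
  | 0 => @Bat k m (@aopt0 k m z (thead w)) 0 w
  | j'.+1 => [&& @kept k m z j' w,
                 [exists u in @Mog k m z, tprefeq j'.+1 u w] &
                 @Bat k m (@aopt0 k m z (thead w)) j'.+1 w]
  end.

Definition tree_out (k m : nat) (z : X k.-1) : {set tupT X k m} :=
  [set w | @kept k m z m w].

End IHMM.
Arguments ind {R T} x _.

(* Main.v *)
Require Import Defs.
From HB Require Import structures.
From mathcomp Require Import all_boot all_order all_algebra.
From mathcomp Require Import boolp classical_sets reals.
From mathcomp Require Import ring lra.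
Import Order.TTheory GRing.Theory Num.Theory.
Local Open Scope ring_scope.
Set Implicit Arguments. Unset Strict Implicit. Unset Printing Implicit Defensive.

Section Coh.
Variable R : realType.
Variable T : finType.
Implicit Types (P : (T -> R) -> R) (f g : T -> R).

Lemma coh_lb P : coherent P -> forall f c, (forall x, c <= f x) -> c <= P f.
Proof. by case. Qed.
Lemma coh_hom P : coherent P -> forall l f, 0 <= l -> P (fun x => l * f x) = l * P f.
Proof. by case. Qed.
Lemma coh_sadd P : coherent P -> forall f g, P f + P g <= P (fun x => f x + g x).
Proof. by case. Qed.

Lemma coh0 P : coherent P -> P (fun _ => 0) = 0.
Proof.
move=> cP; have h := coh_hom cP (fun _ => 0) (lexx 0).
have e : (fun _ : T => (0:R)) = (fun x => 0 * (fun _ => 0) x).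
  by apply: funext => x; rewrite mul0r.
by rewrite e h mul0r.
Qed.

Lemma coh_mono P : coherent P -> forall f g, (forall x, f x <= g x) -> P f <= P g.
Proof.
move=> cP f g fg; have h1 := coh_sadd cP f (fun x => g x - f x).
have h2 : 0 <= P (fun x => g x - f x) by apply: coh_lb => // x; rewrite subr_ge0.
have -> : g = (fun x => f x + (g x - f x)) by apply: funext => x; rewrite addrC subrK.
lra.
Qed.

Lemma coh_cstP P : coherent P -> forall c, P (fun _ => c) = c.
Proof.
move=> cP c; apply/eqP; rewrite eq_le; apply/andP; split; last by apply: coh_lb.
have h := coh_sadd cP (fun _ => c) (fun _ => - c).
have h2 : - c <= P (fun _ => - c) by apply: coh_lb.
have ee : (fun _ : T => c + - c) = (fun _ => 0) by apply: funext => x; rewrite subrr.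
rewrite ee in h.
rewrite coh0 // in h; lra.
Qed.

Lemma coh_cst P : coherent P -> forall f c, P (fun x => f x + c) = P f + c.
Proof.
move=> cP f c; apply/eqP; rewrite eq_le; apply/andP; split.
  have h := coh_sadd cP (fun x => f x + c) (fun _ => - c).
  rewrite coh_cstP // in h.
  have ee : (fun x => f x + c + - c) = f by apply: funext => x; rewrite addrK.
rewrite ee in h.
  lra.
have h := coh_sadd cP f (fun _ => c); rewrite coh_cstP // in h.
Qed.

Lemma coh_le_upper P : coherent P -> forall f, P f <= upper P f.
Proof.
move=> cP f; rewrite /upper; have h := coh_sadd cP f (fun x => - f x).
have ee : (fun x => f x + - f x) = (fun _ => 0) by apply: funext => x; rewrite subrr.
rewrite ee in h.
rewrite coh0 // in h; lra.
Qed.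

Lemma upperNN P f : upper P (fun x => - f x) = - P f.
Proof. by rewrite /upper; congr (- P _); apply: funext => x; rewrite opprK. Qed.

Lemma coh_scale P : coherent P -> forall c f,
  P (fun x => c * f x) = if 0 <= c then c * P f else c * upper P f.
Proof.
move=> cP c f; case: ifP => c0; first by rewrite coh_hom.
have -> : (fun x => c * f x) = (fun x => (- c) * (- f x)).
  by apply: funext => x; rewrite mulrNN.
rewrite (coh_hom cP); last by move/negbT: c0; rewrite -ltNge oppr_ge0 => /ltW.
by rewrite /upper mulrN mulNr.
Qed.

Lemma coh_sum P : coherent P -> forall (I : Type) (s : seq I) (F : I -> T -> R),
  \sum_(i <- s) P (F i) <= P (fun y => \sum_(i <- s) F i y).
Proof.
move=> cP I s F; elim: s => [|i s IH].
  rewrite big_nil; have -> : (fun y : T => \sum_(i <- [::]) F i y) = (fun _ => 0).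
    by apply: funext => y; rewrite big_nil.
  by rewrite coh0.
rewrite big_cons.
have -> : (fun y => \sum_(j <- i :: s) F j y) = (fun y => F i y + \sum_(j <- s) F j y).
  by apply: funext => y; rewrite big_cons.
apply: le_trans (coh_sadd cP _ _); lra.
Qed.

Lemma coh_ind_ge0 P : coherent P -> forall (x : T), 0 <= P (ind x).
Proof. by move=> cP x; apply: coh_lb => // y; rewrite /ind ler0n. Qed.

End Coh.


Section HBs.
Variable R : realType.
Variable T : finType.
Variable P : (T -> R) -> R.
Hypothesis cP : coherent P.

Definition lin (p f : T -> R) := \sum_t p t * f t.
Definition supp_in (s : seq T) (f : T -> R) := forall t, t \notin s -> f t = 0.

Lemma linD p f g : lin p (fun t => f t + g t) = lin p f + lin p g.
Proof. by rewrite /lin -big_split /=; apply: eq_bigr => t _; rewrite mulrDr. Qed.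
Lemma linZ p c f : lin p (fun t => c * f t) = c * lin p f.
Proof. by rewrite /lin mulr_sumr; apply: eq_bigr => t _; rewrite mulrCA. Qed.
Lemma linN p f : lin p (fun t => - f t) = - lin p f.
Proof. by rewrite /lin -sumrN; apply: eq_bigr => t _; rewrite mulrN. Qed.
Lemma lin_ind p e : lin p (ind e) = p e.
Proof.
rewrite /lin (bigD1 e) //= /ind eqxx mulr1 big1 ?addr0 // => t /negbTE te.
by rewrite te mulr0.
Qed.
Lemma lin_ext p f g : (forall t, f t = g t) -> lin p f = lin p g.
Proof. by move=> e; apply: eq_bigr => t _; rewrite e. Qed.

Lemma upper_ext f g : (forall t, f t = g t) -> upper P f = upper P g.
Proof. by move=> e; rewrite (_ : f = g) //; apply: funext. Qed.

Lemma upper_sub f g : upper P (fun t => f t + g t) <= upper P f + upper P g.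
Proof.
rewrite /upper; have h := coh_sadd cP (fun t => - f t) (fun t => - g t).
have ee : (fun t => - f t + - g t) = (fun t => - (f t + g t)).
  by apply: funext => t; rewrite opprD.
rewrite ee in h; lra.
Qed.

Lemma upper_hom l f : 0 <= l -> upper P (fun t => l * f t) = l * upper P f.
Proof.
move=> l0; rewrite /upper mulrN -(coh_hom cP _ l0); congr (- P _).
by apply: funext => t; rewrite mulrN.
Qed.

Lemma hb_step (s : seq T) (e : T) (p : T -> R) :
  (forall f, supp_in s f -> lin p f <= upper P f) ->
  exists p', (forall t, t \in s -> p' t = p t) /\
    forall f, supp_in (e :: s) f -> lin p' f <= upper P f.
Proof.
move=> Hp; case: (boolP (e \in s)) => es.
  exists p; split => // f Hf; apply: Hp => t ts; apply: Hf.
  by rewrite inE negb_or ts andbT; apply/eqP => te; rewrite te es in ts.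
pose E : set R := fun r => exists g, supp_in s g /\
   r = lin p g - upper P (fun t => g t - ind e t).
have ubE : forall g2, supp_in s g2 -> forall r, E r ->
    r <= upper P (fun t => g2 t + ind e t) - lin p g2.
  move=> g2 sg2 r [g [sg ->]].
  have sgg : supp_in s (fun t => g t + g2 t).
    by move=> t ts; rewrite sg // sg2 // addr0.
  have h1 := Hp _ sgg; rewrite linD in h1.
  have h2 := upper_sub (fun t => g t - ind e t) (fun t => g2 t + ind e t).
  rewrite (upper_ext (g := fun t => g t + g2 t)) in h2; last first.
    by move=> t; lra.
  lra.
have s0 : supp_in s (fun _ => 0) by [].
have E0 : E (lin p (fun _ => 0) - upper P (fun t => 0 - ind e t)).
  by exists (fun _ => 0).
have hsE : has_sup E.
  split; first by eexists; exact: E0.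
  exists (upper P (fun t => 0 + ind e t) - lin p (fun _ => 0)) => r Er.
  exact: ubE.
pose c := sup E.
have cub : forall r, E r -> r <= c by move=> r Er; apply: ub_le_sup => //; case: hsE.
have cle : forall g2, supp_in s g2 -> c <= upper P (fun t => g2 t + ind e t) - lin p g2.
  move=> g2 sg2; apply: ge_sup; first by eexists; exact: E0.
  by move=> r Er; exact: ubE.
exists (fun t => if t == e then c else p t); split.
  by move=> t ts; case: eqP => // te; move: es; rewrite -te ts.
move=> f Hf; pose l := f e; pose g := fun t => if t == e then 0 else f t.
have sg : supp_in s g.
  move=> t ts; rewrite /g; case: eqP => // /eqP te; apply: Hf.
  by rewrite inE negb_or te.
have fE : forall t, f t = g t + l * ind e t.
  by move=> t; rewrite /g /ind /l; case: eqP => [->|]; rewrite ?mulr1 ?mulr0 ?add0r ?addr0.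
rewrite (lin_ext _ fE) linD linZ lin_ind eqxx.
have -> : lin (fun t => if t == e then c else p t) g = lin p g.
  by apply: eq_bigr => t _; rewrite /g; case: eqP => // ->; rewrite !mulr0.
rewrite (upper_ext fE).
have hcase : 0 < l \/ l < 0 \/ l = 0.
  by case: (ltrgt0P l) => h; [left|right;left|right;right].
case: hcase => [hl|[hl|hl]].
- have sgl : supp_in s (fun t => l^-1 * g t) by move=> t ts; rewrite sg // mulr0.
  have h := cle (fun t => l^-1 * g t) sgl.
  rewrite linZ in h.
  rewrite (upper_ext (g := fun t => l^-1 * (g t + l * ind e t))) in h; last first.
    by move=> t; rewrite mulrDr mulrA mulVf ?mul1r // gt_eqF.
  rewrite upper_hom in h; last by rewrite invr_ge0 ltW.
  have hh : l * c <= l * (l^-1 * upper P (fun t => g t + l * ind e t) - l^-1 * lin p g).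
    by rewrite ler_pM2l.
  rewrite mulrBr !mulrA mulfV ?gt_eqF // !mul1r in hh.
  lra.
- pose mu := - l.
  have hmu : 0 < mu by rewrite /mu oppr_gt0.
  have sgl : supp_in s (fun t => mu^-1 * g t) by move=> t ts; rewrite sg // mulr0.
  have Er : E (lin p (fun t => mu^-1 * g t) - upper P (fun t => mu^-1 * g t - ind e t)).
    by exists (fun t => mu^-1 * g t).
  have h := cub _ Er; rewrite linZ in h.
  rewrite (upper_ext (g := fun t => mu^-1 * (g t + l * ind e t))) in h; last first.
    have lE : l = - mu by rewrite /mu opprK.
    by move=> t; rewrite lE mulrDr mulNr mulrN mulrA mulVf ?gt_eqF // mul1r.
  rewrite upper_hom in h; last by rewrite invr_ge0 ltW.
  have hh : mu * (mu^-1 * lin p g - mu^-1 * upper P (fun t => g t + l * ind e t)) <= mu * c.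
    by rewrite ler_pM2l.
  rewrite mulrBr !mulrA mulfV ?gt_eqF // !mul1r in hh.
  rewrite /mu in hh; lra.
- rewrite hl mul0r addr0.
  rewrite (upper_ext (g := g)); last by move=> t; rewrite mul0r addr0.
  exact: Hp.
Qed.

Lemma hb_all (s0 : seq T) (p0 : T -> R) :
  (forall f, supp_in s0 f -> lin p0 f <= upper P f) ->
  exists p, (forall t, t \in s0 -> p t = p0 t) /\ forall f, lin p f <= upper P f.
Proof.
move=> H0.
have : forall s, exists p, (forall t, t \in s0 -> p t = p0 t) /\
   forall f, supp_in (s ++ s0) f -> lin p f <= upper P f.
  elim=> [|e s [p [Ha Hb]]]; first by exists p0.
  have [p' [Ha' Hb']] := hb_step e Hb.
  exists p'; split; first by move=> t ts; rewrite Ha' ?Ha // mem_cat ts orbT.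
  exact: Hb'.
move=> /(_ (enum T)) [p [Ha Hb]]; exists p; split => // f; apply: Hb.
by move=> t; rewrite mem_cat mem_enum.
Qed.

Lemma dom_exists (o : T) (w : R) : P (ind o) <= w -> w <= upper P (ind o) ->
  exists p : T -> R, (forall f, P f <= lin p f) /\ p o = w.
Proof.
move=> h1 h2.
have H0 : forall f, supp_in [:: o] f -> lin (fun _ => w) f <= upper P f.
  move=> f sf.
  have fE : forall t, f t = f o * ind o t.
    move=> t; rewrite /ind; case: eqP => [->|/eqP to]; first by rewrite mulr1.
    by rewrite mulr0 sf // inE.
  rewrite (lin_ext _ fE) linZ (upper_ext fE).
  rewrite (_ : lin (fun _ => w) (ind o) = w); last first.
    by have := lin_ind (fun _ => w) o.
  case: (boolP (0 <= f o)) => hf.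
    by rewrite upper_hom // ler_wpM2l.
  rewrite /upper.
  rewrite (_ : (fun x => - (f o * ind o x)) = (fun x => (- f o) * ind o x)); last first.
    by apply: funext => t; rewrite mulNr.
  have hf' : f o <= 0 by rewrite leNgt; apply: contra hf => /ltW.
  rewrite (coh_hom cP) ?oppr_ge0 // mulNr opprK.
  by rewrite ler_wnM2l.
have [p [Ha Hb]] := @hb_all [:: o] (fun _ => w) H0.
exists p; split; last by rewrite Ha ?mem_head.
move=> f; have := Hb (fun t => - f t); rewrite linN /upper.
rewrite (_ : (fun t => - - f t) = f); first lra.
by apply: funext => t; rewrite opprK.
Qed.

Lemma dom_props (p : T -> R) : (forall f, P f <= lin p f) ->
  (forall t, 0 <= p t) /\ \sum_t p t = 1.
Proof.
move=> Hp; split.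
  by move=> t; rewrite -lin_ind; apply: le_trans (Hp _); apply: coh_ind_ge0.
have h1 := Hp (fun _ => 1); have h2 := Hp (fun _ => -1).
rewrite !(coh_cstP cP) in h1 h2.
have e1 : lin p (fun _ => 1) = \sum_t p t by apply: eq_bigr => t _; rewrite mulr1.
have e2 : lin p (fun _ => -1) = - \sum_t p t.
  by rewrite -sumrN; apply: eq_bigr => t _; rewrite mulrN1.
rewrite e1 in h1; rewrite e2 in h2; lra.
Qed.

End HBs.

Section Dom.
Variable R : realType.
Variable T : finType.
Variable P : (T -> R) -> R.
Hypothesis cP : coherent P.

Lemma dom_any : exists p : T -> R, forall f, P f <= lin p f.
Proof.
have H0 : forall f, supp_in [::] f -> lin (fun _ => 0) f <= upper P f.
  move=> f sf; have fE : f = (fun _ => 0) by apply: funext => t; apply: sf.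
  have e1 : lin (fun _ => 0) f = 0 by rewrite /lin big1 // => t _; rewrite mul0r.
  have e2 : (fun t : T => - f t) = (fun _ => 0) by apply: funext => t; rewrite fE oppr0.
  by rewrite e1 /upper e2 coh0 // oppr0.
have [p [_ Hb]] := @hb_all R T P cP [::] (fun _ => 0) H0.
exists p => f; have := Hb (fun t => - f t); rewrite linN /upper.
rewrite (_ : (fun t => - - f t) = f); first lra.
by apply: funext => t; rewrite opprK.
Qed.
End Dom.


Section INE.
Variable R : realType.
Variables T1 T2 : finType.
Variable P1 : (T1 -> R) -> R.
Variable P2 : (T2 -> R) -> R.
Hypothesis c1 : coherent P1.
Hypothesis c2 : coherent P2.

Definition Aset (f : T1 * T2 -> R) : set R := fun mu => exists h1 h2 : T1 * T2 -> R,
        [/\ (forall y, 0 <= P1 (fun x => h1 (x, y))),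
            (forall x, 0 <= P2 (fun y => h2 (x, y))) &
            (forall w, mu <= f w - h1 w - h2 w)].

Lemma indnatextE f : indnatext P1 P2 f = sup (Aset f).
Proof. by []. Qed.

Lemma A_ub (p : T1 -> R) f : (forall g, P1 g <= lin p g) ->
  forall mu, Aset f mu -> mu <= P2 (fun y => lin p (fun x => f (x, y))).
Proof.
move=> Hp mu [h1 [h2 [H1 H2 H3]]].
have [p0 p1] := dom_props c1 Hp.
have step : forall y, lin p (fun x => h2 (x, y)) + mu <= lin p (fun x => f (x, y)).
  move=> y.
  have g0 : 0 <= \sum_x p x * (f (x, y) - h1 (x, y) - h2 (x, y) - mu).
    apply: sumr_ge0 => x _; apply: mulr_ge0 => //; have := H3 (x, y); lra.
  have e : \sum_x p x * (f (x, y) - h1 (x, y) - h2 (x, y) - mu) =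
      lin p (fun x => f (x, y)) - lin p (fun x => h1 (x, y)) - lin p (fun x => h2 (x, y))
      - mu * \sum_x p x.
    rewrite /lin mulr_sumr -!sumrB; apply: eq_bigr => x _; ring.
  have hh := Hp (fun x => h1 (x, y)); have := H1 y.
  rewrite p1 mulr1 in e; lra.
apply: le_trans (coh_mono c2 step).
rewrite (coh_cst c2).
have hs := coh_sum c2 (index_enum T1) (fun x y => p x * h2 (x, y)).
have hs2 : 0 <= \sum_(x <- index_enum T1) P2 (fun y => p x * h2 (x, y)).
  apply: sumr_ge0 => x _; rewrite (coh_hom c2) //; apply: mulr_ge0 => //.
have -> : (fun y => lin p (fun x => h2 (x, y))) =
   (fun y => \sum_(x <- index_enum T1) p x * h2 (x, y)) by [].
lra.
Qed.

Lemma A_ne f : Aset f (- \sum_w `|f w|).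
Proof.
exists (fun _ => 0), (fun _ => 0); split.
- by move=> y; rewrite coh0.
- by move=> x; rewrite coh0.
- move=> w; rewrite !subr0; have : `|f w| <= \sum_w `|f w|.
    by rewrite (bigD1 w) //= lerDl sumr_ge0.
  have := ler_norm (- f w); rewrite normrN; lra.
Qed.

Lemma A_hassup f : has_sup (Aset f).
Proof.
have [p Hp] := dom_any c1.
split; first by eexists; exact: A_ne.
by exists (P2 (fun y => lin p (fun x => f (x, y)))) => mu; apply: A_ub.
Qed.

Lemma E_ge f mu : Aset f mu -> mu <= indnatext P1 P2 f.
Proof. by move=> Am; apply: ub_le_sup => //; case: (A_hassup f). Qed.

Lemma E_le f b : (forall mu, Aset f mu -> mu <= b) -> indnatext P1 P2 f <= b.
Proof. by move=> H; apply: ge_sup => //; eexists; exact: A_ne. Qed.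

Lemma E_coherent : coherent (indnatext P1 P2).
Proof.
split.
- move=> f c Hc; apply: E_ge; exists (fun _ => 0), (fun _ => 0); split.
  + by move=> y; rewrite coh0.
  + by move=> x; rewrite coh0.
  + by move=> w; rewrite !subr0.
- move=> l f l0; have [->|lp] := eqVneq l 0.
    rewrite mul0r; apply/eqP; rewrite eq_le; apply/andP; split.
      have [p Hp] := dom_any c1.
      apply: E_le => mu Am; have := A_ub Hp Am.
      have -> : (fun y => lin p (fun x => 0 * f (x, y))) = (fun _ => 0).
        by apply: funext => y; rewrite /lin big1 // => x _; rewrite mul0r mulr0.
      by rewrite coh0.
    apply: E_ge; exists (fun _ => 0), (fun _ => 0); split.
    + by move=> y; rewrite coh0.
    + by move=> x; rewrite coh0.
    + by move=> w; rewrite !subr0 mul0r.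
  have lg : 0 < l by rewrite lt_def lp.
  have ln0 : l != 0 by [].
  have li0 : 0 <= l^-1 by rewrite invr_ge0 ltW.
  apply/eqP; rewrite eq_le; apply/andP; split.
    apply: E_le => mu [h1 [h2 [H1 H2 H3]]].
    suff h : l^-1 * mu <= indnatext P1 P2 f.
      by rewrite -(mulVKf ln0 mu); apply: ler_wpM2l => //; apply: ltW.
    apply: E_ge; exists (fun w => l^-1 * h1 w), (fun w => l^-1 * h2 w); split.
    + move=> y; rewrite (coh_hom c1) //.
      by apply: mulr_ge0.
    + move=> x; rewrite (coh_hom c2) //.
      by apply: mulr_ge0.
    + move=> w; have h := ler_wpM2l li0 (H3 w).
      by rewrite !mulrBr mulKf // in h.
  suff h : indnatext P1 P2 f <= l^-1 * indnatext P1 P2 (fun x => l * f x).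
    by rewrite -(mulVKf ln0 (indnatext P1 P2 (fun x => l * f x))); apply: ler_wpM2l => //; apply: ltW.
  apply: E_le => mu [h1 [h2 [H1 H2 H3]]].
  rewrite -(mulKf ln0 mu); apply: ler_wpM2l => //; apply: E_ge.
  exists (fun w => l * h1 w), (fun w => l * h2 w); split.
  + move=> y; rewrite (coh_hom c1); last exact: ltW.
    by apply: mulr_ge0 => //; apply: ltW.
  + move=> x; rewrite (coh_hom c2); last exact: ltW.
    by apply: mulr_ge0 => //; apply: ltW.
  + move=> w; have h := ler_wpM2l (ltW lg) (H3 w).
    by rewrite !mulrBr in h.
- move=> f g; have ha := E_le (f := f).
  suff H : forall a b, Aset f a -> Aset g b -> a + b <= indnatext P1 P2 (fun w => f w + g w).
    have h1 : indnatext P1 P2 f <= indnatext P1 P2 (fun w => f w + g w) - indnatext P1 P2 g.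
      apply: E_le => a Aa.
      have : indnatext P1 P2 g <= indnatext P1 P2 (fun w => f w + g w) - a.
        by apply: E_le => b Ab; have := H a b Aa Ab; lra.
      lra.
    lra.
  move=> a b [h1 [h2 [H1 H2 H3]]] [k1 [k2 [K1 K2 K3]]].
  apply: E_ge; exists (fun w => h1 w + k1 w), (fun w => h2 w + k2 w); split.
  + move=> y; apply: le_trans (coh_sadd c1 _ _); have := H1 y; have := K1 y; lra.
  + move=> x; apply: le_trans (coh_sadd c2 _ _); have := H2 x; have := K2 x; lra.
  + move=> w; have := H3 w; have := K3 w; lra.
Qed.


Lemma E_fact (o : T1) (g : T2 -> R) :
  indnatext P1 P2 (fun w => ind o w.1 * g w.2) = P1 (fun x => P2 g * ind o x).
Proof.
set v := P2 g.
apply/eqP; rewrite eq_le; apply/andP; split.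
  pose w := if 0 <= v then P1 (ind o) else upper P1 (ind o).
  have hw1 : P1 (ind o) <= w by rewrite /w; case: ifP => // _; exact: coh_le_upper.
  have hw2 : w <= upper P1 (ind o) by rewrite /w; case: ifP => // _; exact: coh_le_upper.
  have [p [Hp po]] := dom_exists c1 hw1 hw2.
  have [p0 _] := dom_props c1 Hp.
  apply: E_le => mu Am; apply: le_trans (A_ub Hp Am) _.
  have -> : (fun y => lin p (fun x => ind o (x, y).1 * g (x, y).2)) = (fun y => p o * g y).
    apply: funext => y.
    have ee : forall x, ind o (x, y).1 * g (x, y).2 = g y * ind o x.
      by move=> x; rewrite mulrC.
    by rewrite (lin_ext p ee) linZ lin_ind mulrC.
  rewrite (coh_hom c2) // (coh_scale c1) po /w; by case: ifP => _; rewrite mulrC.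
apply: E_ge.
exists (fun w => v * ind o w.1 - P1 (fun x => v * ind o x)),
       (fun w => ind o w.1 * (g w.2 - v)); split.
- move=> y /=; rewrite (coh_cst c1 (fun x => v * ind o x)) subrr //.
- move=> x /=; rewrite (coh_hom c2); last by rewrite /ind ler0n.
  by rewrite (coh_cst c2) subrr mulr0.
- move=> w /=.
  have -> : ind o w.1 * g w.2 - (v * ind o w.1 - P1 (fun x => v * ind o x)) -
     ind o w.1 * (g w.2 - v) = P1 (fun x => v * ind o x) by ring.
  exact: lexx.
Qed.

End INE.


Lemma comp_coh (R : realType) (T W A : finType) (Qc : (T -> R) -> R)
  (E : T -> (W -> R) -> R) (sl : T -> W -> A) :
  coherent Qc -> (forall x, coherent (E x)) ->
  coherent (fun f : A -> R => Qc (fun x => E x (fun w => f (sl x w)))).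
Proof.
move=> cQ cE; split.
- move=> f c Hc; apply: coh_lb => // x; apply: coh_lb => // w.
- move=> l f l0; rewrite -(coh_hom cQ _ l0); congr Qc; apply: funext => x.
  by rewrite (coh_hom (cE x)).
- move=> f g; apply: le_trans (coh_sadd cQ _ _) _; apply: coh_mono => // x.
  exact: (coh_sadd (cE x)).
Qed.

Unset Implicit Arguments.
Section Main.
Variable R : realType.
Variables X O : nat -> finType.
Variable Q : forall i, X i.-1 -> (X i -> R) -> R.
Variable S : forall i, X i -> (O i -> R) -> R.
Variable n : nat.
Variable o : forall i, O i.
Hypothesis HQ : forall i (z : X i.-1), (1 <= i <= n)%N -> coherent (Q i z).
Hypothesis HS : forall i (z : X i), (1 <= i <= n)%N -> coherent (S i z).
Hypothesis HQp : forall i (z : X i.-1) (x : X i), (1 <= i <= n)%N ->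
     0 < upper (Q i z) (ind x).
Hypothesis HSp : forall i (z : X i) (y : O i), (1 <= i <= n)%N ->
     0 < upper (S i z) (ind y).

Lemma Pj_coh m : forall k (z : X k.-1), (1 <= k)%N -> (k + m <= n)%N ->
  coherent (@Pj R X O Q S k m z).
Proof.
elim: m => [|m IH] k z k1 km.
  apply: (@comp_coh R (X k) (O k) _ (Q k z) (fun x => S k x) (fun x y => (x, y))).
    by apply: HQ; rewrite k1; rewrite addn0 in km.
  by move=> x; apply: HS; rewrite k1; rewrite addn0 in km.
apply: (@comp_coh R (X k) _ _ (Q k z) (fun x => indnatext (S k x) (@Pj R X O Q S k.+1 m x))
   (fun x w => ((x, w.2.1), (w.1, w.2.2)))).
  by apply: HQ; rewrite k1 /=; apply: leq_trans km; rewrite leq_addr.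
move=> x; apply: E_coherent.
  by apply: HS; rewrite k1 /=; apply: leq_trans km; rewrite leq_addr.
by apply: IH => //; rewrite addSnnS.
Qed.


Definition G k m (z : X k.-1) (h : tupT X k m -> R) : R :=
  @Pj R X O Q S k m z (fun w => (w.2 == tproj o k m)%:R * h w.1).

Definition Sc k (x : X k) (c : R) := S k x (fun y => c * ind (o k) y).

Lemma Sc_val k x c : (1 <= k <= n)%N -> Sc k x c =
  if 0 <= c then c * S k x (ind (o k)) else c * upper (S k x) (ind (o k)).
Proof. by move=> kn; rewrite /Sc (coh_scale (HS k x kn)). Qed.

Lemma Sc0 k x : (1 <= k <= n)%N -> Sc k x 0 = 0.
Proof. by move=> kn; rewrite Sc_val // lexx mul0r. Qed.

Lemma G0 k z h : G k 0 z h = Q k z (fun x => Sc k x (h x)).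
Proof.
rewrite /G /=; congr (Q k z); apply: funext => x; rewrite /Sc; congr (S k x).
by apply: funext => y; rewrite mulrC.
Qed.

Lemma GS k m z h : (1 <= k)%N -> (k + m.+1 <= n)%N ->
  G k m.+1 z h = Q k z (fun x => Sc k x (G k.+1 m x (fun xs => h (x, xs)))).
Proof.
move=> k1 km; rewrite /G /=; congr (Q k z); apply: funext => x.
have kn : (1 <= k <= n)%N by rewrite k1 /=; apply: leq_trans km; rewrite leq_addr.
have km' : (k.+1 + m <= n)%N by rewrite addSnnS.
rewrite (_ : (fun w : O k * (tupT X k.+1 m * tupT O k.+1 m) =>
     ((w.1, w.2.2) == (o k, tproj o k.+1 m))%:R * h (x, w.2.1)) =
   (fun w => ind (o k) w.1 * ((fun w2 : tupT X k.+1 m * tupT O k.+1 m =>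
        (w2.2 == tproj o k.+1 m)%:R * h (x, w2.1)) w.2))); last first.
  apply: funext => w /=; rewrite xpair_eqE /ind.
  by case: (w.1 == o k); case: (w.2.2 == tproj o k.+1 m); rewrite /= ?mul0r ?mul1r.
exact: (E_fact (HS k x kn) (Pj_coh m k.+1 x (isT : (1 <= k.+1)%N) km') (o k) (fun w2 : tupT X k.+1 m * tupT O k.+1 m => (w2.2 == tproj o k.+1 m)%:R * h (x, w2.1))).
Qed.

Lemma G_zero m : forall k z, (1 <= k)%N -> (k + m <= n)%N -> G k m z (fun _ => 0) = 0.
Proof.
move=> k z k1 km; rewrite /G.
rewrite (_ : (fun w : tupT X k m * tupT O k m => (w.2 == tproj o k m)%:R * 0) = (fun _ => 0)).
  by rewrite coh0 //; apply: Pj_coh.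
by apply: funext => w; rewrite mulr0.
Qed.

Lemma Qscale k z (F : X k -> R) a c : (1 <= k <= n)%N ->
  (forall y, F y = c * ind a y) ->
  Q k z F = if 0 <= c then c * Q k z (ind a) else c * upper (Q k z) (ind a).
Proof.
move=> kn e; rewrite (_ : F = fun y => c * ind a y); last exact: funext.
exact: (coh_scale (HQ k z kn)).
Qed.

Lemma beta_ge0 m : forall k (x : tupT X k m), (1 <= k)%N -> (k + m <= n)%N ->
  0 <= beta Q S o x.
Proof.
elim: m => [|m IH] k x k1 km.
  by apply: coh_ind_ge0; apply: HS; rewrite k1 /=; rewrite addn0 in km.
case: x => x1 x2 /=.
have kn : (1 <= k <= n)%N by rewrite k1 /=; apply: leq_trans km; rewrite leq_addr.
have k1n : (1 <= k.+1 <= n)%N by rewrite /=; apply: leq_trans km; rewrite addnS ltnS leq_addr.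
apply: mulr_ge0; first apply: mulr_ge0.
- exact: coh_ind_ge0 (HS k x1 kn) _.
- exact: coh_ind_ge0 (HQ k.+1 x1 k1n) _.
- by apply: IH; rewrite // addSnnS.
Qed.

Lemma alpha_gt0 m : forall k (x : tupT X k m), (1 <= k)%N -> (k + m <= n)%N ->
  0 < alpha Q S o x.
Proof.
elim: m => [|m IH] k x k1 km.
  by apply: HSp; rewrite k1; rewrite addn0 in km.
case: x => x1 x2 /=.
have kn : (1 <= k <= n)%N by rewrite k1 /=; apply: leq_trans km; rewrite leq_addr.
have k1n : (1 <= k.+1 <= n)%N by rewrite /=; apply: leq_trans km; rewrite addnS ltnS leq_addr.
apply: mulr_gt0; first apply: mulr_gt0.
- exact: HSp.
- exact: HQp.
- by apply: IH; rewrite // addSnnS.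
Qed.


Lemma kn_of k m : (1 <= k)%N -> (k + m <= n)%N -> (1 <= k <= n)%N.
Proof. by move=> k1 km; rewrite k1 /=; apply: leq_trans km; rewrite leq_addr. Qed.
Lemma k1n_of k m : (1 <= k)%N -> (k + m.+1 <= n)%N -> (1 <= k.+1 <= n)%N.
Proof. by move=> k1 km; rewrite /=; apply: leq_trans km; rewrite addnS ltnS leq_addr. Qed.
Lemma km_of k m : (k + m.+1 <= n)%N -> (k.+1 + m <= n)%N.
Proof. by rewrite addSnnS. Qed.

Arguments kn_of {k m}. Arguments k1n_of {k m}. Arguments km_of {k m}.

Lemma ind_eq (T : finType) (a : T) : ind a a = 1 :> R.
Proof. by rewrite /ind eqxx. Qed.
Lemma ind_neq (T : finType) (a y : T) : y != a -> ind a y = 0 :> R.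
Proof. by rewrite /ind => /negbTE ->. Qed.

Lemma Gind m : forall k z (x : tupT X k m), (1 <= k)%N -> (k + m <= n)%N ->
  G k m z (fun w => (w == x)%:R) = beta Q S o x * Q k z (ind (Defs.thead x)).
Proof.
elim: m => [|m IH] k z x k1 km; have kn := kn_of k1 km.
  rewrite G0 (@Qscale k z _ x (beta Q S o x) kn); first by rewrite (beta_ge0 0 k x k1 km).
  move=> y; case: (eqVneq y x) => [->|ne].
    by rewrite Sc_val // ler01 mul1r ind_eq mulr1.
  by rewrite Sc0 // ind_neq // mulr0.
have k1n := k1n_of k1 km; have km' := km_of km.
case: x => x1 x2.
set b := beta Q S o x2 * Q k.+1 x1 (ind (Defs.thead x2)).
have b0 : 0 <= b.
  apply: mulr_ge0; [exact: (beta_ge0 m k.+1 x2 isT km')|exact: coh_ind_ge0 (HQ k.+1 x1 k1n) _].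
rewrite GS // (@Qscale k z _ x1 (b * S k x1 (ind (o k))) kn).
  rewrite ifT; last by apply: mulr_ge0 => //; exact: coh_ind_ge0 (HS k x1 kn) _.
  by rewrite /= /b; ring.
move=> y; case: (eqVneq y x1) => [->|ne].
  rewrite (_ : (fun xs => ((x1, xs) == (x1, x2))%:R) = (fun xs => (xs == x2)%:R)); last first.
    by apply: funext => xs; rewrite xpair_eqE eqxx.
  by rewrite IH // Sc_val // ifT // ind_eq mulr1.
rewrite (_ : (fun xs => ((y, xs) == (x1, x2))%:R) = (fun _ => 0)); last first.
  by apply: funext => xs; rewrite xpair_eqE (negbTE ne).
by rewrite G_zero // Sc0 // ind_neq // mulr0.
Qed.


Lemma Gnind m : forall k z (x : tupT X k m), (1 <= k)%N -> (k + m <= n)%N ->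
  G k m z (fun w => - (w == x)%:R) =
  - (alpha Q S o x * upper (Q k z) (ind (Defs.thead x))).
Proof.
elim: m => [|m IH] k z x k1 km; have kn := kn_of k1 km.
  have a0 := alpha_gt0 0 k x k1 km.
  rewrite G0 (@Qscale k z _ x (- alpha Q S o x) kn).
    by rewrite ifF ?mulNr // oppr_ge0 leNgt a0.
  move=> y; case: (eqVneq y x) => [->|ne].
    rewrite Sc_val // ifF; last by rewrite oppr_ge0 leNgt ltr01.
    by rewrite ind_eq mulr1 mulN1r.
  by rewrite mulr0n oppr0 Sc0 // ind_neq // mulr0.
have k1n := k1n_of k1 km; have km' := km_of km.
case: x => x1 x2.
set b := alpha Q S o x2 * upper (Q k.+1 x1) (ind (Defs.thead x2)).
have b0 : 0 < b.
  apply: mulr_gt0; [exact: (alpha_gt0 m k.+1 x2 isT km')|exact: HQp].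
have s0 : 0 < upper (S k x1) (ind (o k)) by exact: HSp.
rewrite GS // (@Qscale k z _ x1 (- b * upper (S k x1) (ind (o k))) kn).
  rewrite ifF; last by rewrite mulNr oppr_ge0 leNgt mulr_gt0.
  by rewrite /= /b; ring.
move=> y; case: (eqVneq y x1) => [->|ne].
  rewrite (_ : (fun xs => - ((x1, xs) == (x1, x2))%:R) = (fun xs => - (xs == x2)%:R)); last first.
    by apply: funext => xs; rewrite xpair_eqE eqxx.
  rewrite IH // Sc_val // ifF; last by rewrite oppr_ge0 leNgt b0.
  by rewrite ind_eq mulr1.
rewrite (_ : (fun xs => - ((y, xs) == (x1, x2))%:R) = (fun _ => 0)); last first.
  by apply: funext => xs; rewrite xpair_eqE (negbTE ne) /= mulr0n oppr0.
by rewrite G_zero // Sc0 // ind_neq // mulr0.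
Qed.


Lemma Gdiff m k z (x xh : tupT X k m) : (1 <= k)%N -> (k + m <= n)%N ->
  Defs.thead x != Defs.thead xh ->
  G k m z (fun w => (w == x)%:R - (w == xh)%:R) =
  Q k z (fun y => beta Q S o x * ind (Defs.thead x) y
                 - alpha Q S o xh * ind (Defs.thead xh) y).
Proof.
move=> k1 km hne; have kn := kn_of k1 km.
case: m x xh km hne => [|m] x xh km hne.
  have hne' : x != xh := hne.
  rewrite G0; congr (Q k z); apply: funext => y /=.
  case: (eqVneq y x) => [yx|ne].
    subst y; rewrite (negbTE hne') subr0 Sc_val // ler01 mul1r ind_eq mulr1.
    by rewrite (ind_neq _ _ _ hne') mulr0 subr0.
  case: (eqVneq y xh) => [->|ne2].
    rewrite sub0r Sc_val // ifF; last by rewrite oppr_ge0 leNgt ltr01.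
    by rewrite ind_eq ind_neq 1?eq_sym // mulr0 sub0r mulr1 mulN1r.
  by rewrite subrr Sc0 // !ind_neq // !mulr0 subrr.
have k1n := k1n_of k1 km; have km' := km_of km.
case: x hne => x1 x2; case: xh => xh1 xh2 /= hne.
rewrite GS //; congr (Q k z); apply: funext => y.
case: (eqVneq y x1) => [yx|ne].
  subst y.
  rewrite (_ : (fun xs => ((x1, xs) == (x1, x2))%:R - ((x1, xs) == (xh1, xh2))%:R)
     = (fun xs => (xs == x2)%:R)); last first.
    by apply: funext => xs; rewrite !xpair_eqE eqxx (negbTE hne) /= subr0.
  rewrite Gind // Sc_val // ifT; last first.
    apply: mulr_ge0; [exact: (beta_ge0 m k.+1 x2 isT km')|exact: coh_ind_ge0 (HQ k.+1 x1 k1n) _].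
  by rewrite ind_eq (ind_neq _ _ _ hne) /=; ring.
case: (eqVneq y xh1) => [yx|ne2].
  subst y.
  rewrite (_ : (fun xs => ((xh1, xs) == (x1, x2))%:R - ((xh1, xs) == (xh1, xh2))%:R)
     = (fun xs => - (xs == xh2)%:R)); last first.
    by apply: funext => xs; rewrite !xpair_eqE eqxx eq_sym (negbTE hne) /= sub0r.
  have b0 : 0 < alpha Q S o xh2 * upper (Q k.+1 xh1) (ind (Defs.thead xh2)).
    apply: mulr_gt0; [exact: (alpha_gt0 m k.+1 xh2 isT km')|exact: HQp].
  rewrite Gnind // Sc_val // ifF; last by rewrite oppr_ge0 leNgt b0.
  by rewrite ind_eq ind_neq // /=; ring.
rewrite (_ : (fun xs => ((y, xs) == (x1, x2))%:R - ((y, xs) == (xh1, xh2))%:R)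
   = (fun _ => 0)); last first.
  by apply: funext => xs; rewrite !xpair_eqE (negbTE ne) (negbTE ne2) /= subrr.
by rewrite G_zero // Sc0 // !ind_neq // !mulr0 subrr.
Qed.


Lemma Gsame m k z (a : X k) (x' xh' : tupT X k.+1 m) : (1 <= k)%N -> (k + m.+1 <= n)%N ->
  (G k m.+1 z (fun w => (w == ((a, x') : tupT X k m.+1))%:R
                      - (w == ((a, xh') : tupT X k m.+1))%:R) <= 0) =
  ((G k.+1 m a (fun xs => (xs == x')%:R - (xs == xh')%:R) <= 0)
    || (a \notin Pos Q S o z)).
Proof.
move=> k1 km; have kn := kn_of k1 km; have k1n := k1n_of k1 km; have km' := km_of km.
set v := G k.+1 m a (fun xs => (xs == x')%:R - (xs == xh')%:R).
rewrite GS // (@Qscale k z _ a (Sc k a v) kn); last first.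
  move=> y; case: (eqVneq y a) => [->|ne].
    rewrite ind_eq mulr1 /v; congr (Sc k a (G k.+1 m a _)); apply: funext => xs.
    by rewrite !xpair_eqE eqxx.
  rewrite (_ : (fun xs => ((y, xs) == ((a, x') : tupT X k m.+1))%:R
       - ((y, xs) == ((a, xh') : tupT X k m.+1))%:R) = (fun _ => 0)); last first.
    by apply: funext => xs; rewrite !xpair_eqE (negbTE ne) /= subrr.
  by rewrite G_zero // Sc0 // ind_neq // mulr0.
have Sl0 : 0 <= S k a (ind (o k)) by exact: coh_ind_ge0 (HS k a kn) _.
have Ql0 : 0 <= Q k z (ind a) by exact: coh_ind_ge0 (HQ k z kn) _.
have Su0 : 0 < upper (S k a) (ind (o k)) by exact: HSp.
have Qu0 : 0 < upper (Q k z) (ind a) by exact: HQp.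
rewrite Sc_val // /Pos inE negb_and -!leNgt.
case: (boolP (0 < v)) => hv.
  have h0 : 0 <= v := ltW hv.
  rewrite h0 /= (mulr_ge0 h0 Sl0) (leNgt v 0) hv /=.
  rewrite -mulrA pmulr_rle0 //.
  apply/idP/idP.
    rewrite le_eqVlt => /orP [|]; last by rewrite ltNge mulr_ge0.
    by rewrite mulf_eq0 => /orP [] /eqP ->; rewrite lexx ?orbT.
  case/orP => h.
    have e : Q k z (ind a) = 0 by apply/eqP; rewrite eq_le h Ql0.
    by rewrite e mulr0.
  have e : S k a (ind (o k)) = 0 by apply/eqP; rewrite eq_le h Sl0.
  by rewrite e mul0r.
have hv' : v <= 0 by rewrite leNgt.
rewrite hv' /=.
case: (boolP (0 <= v)) => h0.
  have -> : v = 0 by apply/eqP; rewrite eq_le hv' h0.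
  by rewrite !mul0r lexx /= ?mul0r ?lexx.
rewrite ifF; last by rewrite pmulr_lge0 // (negbTE h0).
apply/idP; apply: mulr_le0_ge0; [apply: mulr_le0_ge0 => //; exact: ltW | exact: ltW].
Qed.


Section Tau.
Variables (k : nat) (z : X k.-1) (x xh : X k).
Hypothesis kn : (1 <= k <= n)%N.
Hypothesis xne : x != xh.

Let F (a : R) := Q k z (fun y => ind x y - a * ind xh y).
Let cQ := HQ k z kn.

Lemma ind01 (T : finType) (a y : T) : 0 <= ind a y :> R /\ ind a y <= 1 :> R.
Proof. by rewrite /ind; case: (y == a); rewrite ?lexx ?ler01. Qed.

Lemma F_mono a b : a <= b -> F b <= F a.
Proof.
move=> ab; apply: coh_mono => // y; have [h0 h1] := ind01 _ xh y.
have : a * ind xh y <= b * ind xh y by apply: ler_wpM2r.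
lra.
Qed.

Lemma F_lip a b : a <= b -> F a <= F b + (b - a).
Proof.
move=> ab; rewrite /F -(coh_cst cQ); apply: coh_mono => // y.
have [h0 h1] := ind01 _ xh y.
have : (b - a) * ind xh y <= b - a.
  by rewrite -[X in _ <= X]mulr1; apply: ler_wpM2l; rewrite ?subr_ge0.
rewrite mulrBl; lra.
Qed.

Let Ux := upper (Q k z) (ind x).
Let Uxh := upper (Q k z) (ind xh).

Lemma F_bound a : 0 <= a -> F a <= Ux - a * Uxh.
Proof.
move=> a0; have h := coh_sadd cQ (fun y => ind x y - a * ind xh y) (fun y => - ind x y).
rewrite (_ : (fun y => ind x y - a * ind xh y + - ind x y) =
   (fun y => a * (- ind xh y))) in h; last first.
  by apply: funext => y; rewrite mulrN; lra.
rewrite (coh_hom cQ) // in h.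
rewrite /Ux /Uxh /upper /F; lra.
Qed.

Definition Etau : set R := fun a => 0 <= a /\ F a <= 0.

Lemma tau_def : tau Q z x xh = inf Etau.
Proof. by []. Qed.

Let a0 := Ux / Uxh.
Lemma a0E : Etau a0.
Proof.
have Uxh0 : 0 < Uxh by exact: HQp.
have Ux0 : 0 < Ux by exact: HQp.
have ha : 0 <= a0 by rewrite /a0 divr_ge0 // ltW.
split => //; have hb := F_bound a0 ha.
have e : a0 * Uxh = Ux by rewrite /a0 mulfVK ?gt_eqF.
by rewrite e subrr in hb.
Qed.

Lemma hinf : has_inf Etau.
Proof. by split; [exists a0; exact: a0E | exists 0 => a []]. Qed.

Lemma tau_ge0 : 0 <= tau Q z x xh.
Proof. by rewrite tau_def; apply: lb_le_inf; [exists a0; exact: a0E|move=> a []]. Qed.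

Lemma F_tau : F (tau Q z x xh) <= 0.
Proof.
rewrite tau_def; rewrite leNgt; apply/negP => hp.
have [b Eb hb] := inf_adherent hp hinf.
have tb : inf Etau <= b by apply: ge_inf => //; case: hinf.
have := F_lip _ _ tb; case: Eb => _ Fb; lra.
Qed.

Lemma FleP a : 0 <= a -> (F a <= 0) = (tau Q z x xh <= a).
Proof.
move=> a0'; apply/idP/idP => h.
  by rewrite tau_def; apply: ge_inf; [case: hinf | split].
by apply: le_trans (F_mono _ _ h) F_tau.
Qed.

Lemma tauP c d : 0 <= c -> 0 <= d ->
  (Q k z (fun y => c * ind x y - d * ind xh y) <= 0) = (c * tau Q z x xh <= d).
Proof.
move=> c0 d0; have [->|cn0] := eqVneq c 0.
  rewrite mul0r d0.
  rewrite (_ : (fun y => 0 * ind x y - d * ind xh y) = (fun y => d * (- ind xh y))).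
    rewrite (coh_hom cQ) //.
    have e : Q k z (fun x0 => - ind xh x0) = - upper (Q k z) (ind xh) by rewrite /upper opprK.
    rewrite e; apply/idP; apply: mulr_ge0_le0 => //; rewrite oppr_le0; apply: ltW; exact: HQp.
  by apply: funext => y; rewrite mul0r sub0r mulrN.
have cp : 0 < c by rewrite lt_def cn0.
rewrite (_ : (fun y => c * ind x y - d * ind xh y) =
   (fun y => c * (ind x y - (d / c) * ind xh y))); last first.
  by apply: funext => y; rewrite mulrBr mulrA mulrCA mulfV ?mulr1.
rewrite (coh_hom cQ) // -/(F _) pmulr_rle0 // FleP ?divr_ge0 //.
by rewrite ler_pdivlMr // mulrC.
Qed.

End Tau.


Lemma alpha_ge0 m k (x : tupT X k m) : (1 <= k)%N -> (k + m <= n)%N -> 0 <= alpha Q S o x.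
Proof. by move=> k1 km; apply: ltW; apply: alpha_gt0. Qed.

Lemma betamax_le m k (y : X k) (t b : R) : 0 <= t -> 0 <= b ->
  (betamax Q S o m y * t <= b) =
  [forall x : tupT X k m, (Defs.thead x == y) ==> (beta Q S o x * t <= b)].
Proof.
move=> t0 b0; apply/idP/forallP.
  move=> h x; apply/implyP => hx; apply: le_trans h; apply: ler_wpM2r => //.
  by rewrite /betamax; apply: le_bigmax_cond.
move=> H; have [->|tn0] := eqVneq t 0; first by rewrite mulr0.
have tp : 0 < t by rewrite lt_def tn0.
rewrite -ler_pdivlMr //; apply/bigmax_leP; split; first by rewrite divr_ge0.
by move=> x hx; rewrite ler_pdivlMr //; have := H x; rewrite hx.
Qed.

Lemma opt_char m k z (xh : tupT X k m.+1) : (1 <= k)%N -> (k + m.+1 <= n)%N ->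
  (xh \in opt Q S o m.+1 z) =
  (aopt0 Q S o m.+1 z xh.1 <= alpha Q S o xh) && (xh \in Mog Q S o m.+1 z).
Proof.
move=> k1 km; have kn := kn_of k1 km; have km' := km_of km.
have a0 := alpha_ge0 m.+1 k xh k1 km.
case: xh a0 => xh1 xh2 a0.
rewrite /opt /Mog !inE.
set A := (aopt0 Q S o m.+1 z xh1 <= _).
have HA : A = [forall x : tupT X k m.+1, (x.1 != xh1) ==>
    (G k m.+1 z (fun w => (w == x)%:R - (w == (xh1, xh2))%:R) <= 0)].
  rewrite /A /aopt0; apply/bigmax_leP/forallP.
    case=> _ H x; apply/implyP => hx.
    rewrite Gdiff // tauP //; last exact: (beta_ge0 m.+1 k x k1 km).
    have := H _ hx; rewrite betamax_le ?tau_ge0 // => /forallP /(_ x).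
    by rewrite eqxx.
  move=> H; split => // y hy; rewrite betamax_le ?tau_ge0 //.
  apply/forallP => -[x1 x2]; apply/implyP => /eqP /= hx; subst y.
  have := H (x1, x2); rewrite /= hy /= Gdiff //.
  by rewrite tauP //; exact: (beta_ge0 m.+1 k (x1, x2) k1 km).
set B := (_ || _).
have HB : B = [forall x2 : tupT X k.+1 m,
    G k m.+1 z (fun w => (w == ((xh1, x2) : tupT X k m.+1))%:R
                      - (w == ((xh1, xh2) : tupT X k m.+1))%:R) <= 0].
  have hPe : (xh1 \in Pos Q S o z) = ((0 < Q k z (ind xh1)) && (0 < S k xh1 (ind (o k)))).
    by rewrite inE.
  rewrite /B -hPe; case: (boolP (xh1 \in Pos Q S o z)) => hP /=.
    rewrite orbF; apply/forallP/forallP => H x2.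
      by rewrite Gsame // hP orbF; apply: H.
    by have := H x2; rewrite Gsame // hP orbF.
  symmetry; apply/forallP => x2; by rewrite Gsame // hP orbT.
rewrite HA HB; apply/forallP/andP.
  move=> H; split.
    by apply/forallP => x; apply/implyP => _; apply: H.
  by apply/forallP => x2; apply: H.
case=> /forallP H1 /forallP H2 x.
case: x => x1 x2; case: (eqVneq x1 xh1) => [->|ne].
  exact: H2.
by have := H1 (x1, x2); rewrite ne.
Qed.


Lemma tprefeq_refl m : forall k j (w : tupT X k m), tprefeq j w w.
Proof.
elim: m => [|m IH] k j w /=; first exact: eqxx.
by rewrite eqxx /=; case: j => // j; apply: IH.
Qed.

Lemma tprefeq_full m : forall k (u w : tupT X k m), tprefeq m u w -> u = w.
Proof.
elim: m => [|m IH] k u w /=; first by move/eqP.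
case: u w => u1 u2 [w1 w2] /= /andP [/eqP -> h]; by rewrite (IH _ _ _ h).
Qed.

Lemma alphamax0 k (w : X k) : (1 <= k <= n)%N -> alphamax Q S o 0 w = alpha Q S o (w : tupT X k 0).
Proof.
move=> kn; rewrite /alphamax (bigmaxD1 w) //=.
rewrite big_pred0; last by move=> i; case: eqVneq.
by rewrite max_l // ltW //; apply: HSp.
Qed.

Lemma Bat_full m : forall k a (w : tupT X k m), (1 <= k)%N -> (k + m <= n)%N ->
  Bat Q S o a m w = (a <= alpha Q S o w).
Proof.
elim: m => [|m IH] k a w k1 km; have kn := kn_of k1 km.
  by rewrite /= alphamax0.
case: w => w1 w2 /=; rewrite IH //; last exact: km_of.
have p1 : 0 < upper (S k w1) (ind (o k)) by exact: HSp.
have p2 : 0 < upper (Q k.+1 w1) (ind (Defs.thead w2)) by apply: HQp; exact: k1n_of km.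
by rewrite ler_pdivrMr ?mulr_gt0 // [X in _ = (_ <= X)]mulrC.
Qed.

Lemma Bat_mono m : forall k a j (w : tupT X k m), (1 <= k)%N -> (k + m <= n)%N ->
  (j <= m)%N -> a <= alpha Q S o w -> Bat Q S o a j w.
Proof.
elim: m => [|m IH] k a j w k1 km jm ha; have kn := kn_of k1 km.
  by rewrite /= alphamax0.
case: w ha => w1 w2 ha; case: j jm => [|j] jm /=.
  apply: le_trans ha _; rewrite /alphamax.
  exact: (@le_bigmax_cond _ _ _ _ ((w1, w2) : tupT X k m.+1)).
apply: IH => //; first exact: km_of.
have p1 : 0 < upper (S k w1) (ind (o k)) by exact: HSp.
have p2 : 0 < upper (Q k.+1 w1) (ind (Defs.thead w2)) by apply: HQp; exact: k1n_of km.
by rewrite ler_pdivrMr ?mulr_gt0 // mulrC.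
Qed.

Lemma tree_char m k z (w : tupT X k m.+1) : (1 <= k)%N -> (k + m.+1 <= n)%N ->
  (w \in tree_out Q S o m.+1 z) = (w \in opt Q S o m.+1 z).
Proof.
move=> k1 km; rewrite opt_char // /tree_out inE.
apply/idP/andP.
  rewrite /= => /and3P [_ /existsP [u /andP [uM uw]] hB].
  have uw' : @tprefeq X k m.+1 m.+1 u w := uw.
  rewrite (tprefeq_full _ _ _ _ uw') in uM; split => //.
  by rewrite -(Bat_full m.+1 k _ w k1 km); exact: hB.
case=> ha hM.
have H : forall j, (j <= m.+1)%N -> kept Q S o z j w.
  elim=> [|j IH] jm.
    by apply: Bat_mono.
  apply/and3P; split.
  - by apply: IH; apply: ltnW.
  - by apply/existsP; exists w; rewrite hM tprefeq_refl.
  - by apply: Bat_mono.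
exact: H.
Qed.

End Main.


Theorem theorem3 (R : realType) (X O : nat -> finType)
    (Q : forall i, X i.-1 -> (X i -> R) -> R)
    (S : forall i, X i -> (O i -> R) -> R)
    (n : nat) (o : forall i, O i) :
  #|X 0%N| = 1%N ->
  (forall i, (1 <= i <= n)%N -> (0 < #|X i|)%N) ->
  (forall i, (1 <= i <= n)%N -> (0 < #|O i|)%N) ->
  (forall i (z : X i.-1), (1 <= i <= n)%N -> coherent (Q i z)) ->
  (forall i (z : X i), (1 <= i <= n)%N -> coherent (S i z)) ->
  (forall i (z : X i.-1) (x : X i), (1 <= i <= n)%N ->
     0 < upper (Q i z) (ind x)) ->
  (forall i (z : X i) (y : O i), (1 <= i <= n)%N ->
     0 < upper (S i z) (ind y)) ->
  forall (k : nat) (z : X k.-1), (1 <= k < n)%N ->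
    tree_out Q S o (n - k)%N z = opt Q S o (n - k)%N z.

Proof.
move=> _ _ _ HQ HS HQp HSp k z /andP [k1 kn].
have hpos : (0 < n - k)%N by rewrite subn_gt0.
have hkm : (k + (n - k) <= n)%N by rewrite subnKC // ltnW.
move: hkm hpos; case: (n - k)%N => [|m] // hkm _.
apply/setP => w.
exact: (@tree_char R X O Q S n o HQ HS HQp HSp m k z w k1 hkm).
Qed.
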